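(* Let $k\ge4$, $t:=\lfloor(k-1)/2\rfloor$, and let $\mathcal{H}$ be a $(t,3k)$-superfull $3$-graph containing two disjoint sets $W_1,W_2\subseteq V(\mathcal{H})$, each of size at least $3k$, such that every pair $(w_1,w_2)\in W_1\times W_2$ has codegree exactly $t$ in $\mathcal{H}$. If $\mathcal{H}$ contains no copy of $C_k^3$, then there exists a $t$-set $L\subseteq V(\mathcal{H})\setminus(W_1\cup W_2)$ such that $N_{\mathcal{H}}(w_1w_2)=L$ for all pairs $(w_1,w_2)\in W_1\times W_2$.
   Context: For a $3$-graph $\mathcal{H}$: $\partial\mathcal{H}$ is the graph of pairs contained in some edge; $N_{\mathcal{H}}(uv)=\{w: uvw\in\mathcal{H}\}$ and the codegree is $d_{\mathcal{H}}(uv)=|N_{\mathcal{H}}(uv)|$. $\mathcal{H}$ is $d$-full if $d_{\mathcal{H}}(uv)\ge d$ for all $uv\in\partial\mathcal{H}$, and $(d,K)$-superfull if it is $d$-full and every edge of $\mathcal{H}$ contains at most one pair of vertices with codegree less than $K$. $C_k^3$ is the expansion of the $k$-cycle: add to each edge of $C_k$ a new vertex, distinct edges receiving distinct new vertices. *)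

(* Defs.v *)
From mathcomp Require Import all_boot.
Set Implicit Arguments. Unset Strict Implicit. Unset Printing Implicit Defensive.

Section Hyper.
Variable V : finType.

Definition is_3graph (H : {set {set V}}) : Prop :=
  forall e, e \in H -> #|e| = 3.

Definition in_shadow (H : {set {set V}}) (u v : V) : bool :=
  (u != v) && [exists e in H, (u \in e) && (v \in e)].

Definition nbh (H : {set {set V}}) (u v : V) : {set V} :=
  [set w | [set u; v; w] \in H].

Definition codeg (H : {set {set V}}) (u v : V) : nat := #|nbh H u v|.

Definition full (d : nat) (H : {set {set V}}) : Prop :=
  forall u v, in_shadow H u v -> d <= codeg H u v.

(* every edge contains at most one (unordered) pair with codegree < K *)
Definition superfull (d K : nat) (H : {set {set V}}) : Prop :=
  full d H /\
  forall e, e \in H ->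
    forall u v x y, u \in e -> v \in e -> x \in e -> y \in e ->
      u != v -> x != y -> codeg H u v < K -> codeg H x y < K ->
      [set u; v] = [set x; y].

(* H contains a copy of the expansion C_k^3 of the k-cycle:
   distinct core vertices f 0, ..., f (k-1) forming the cycle,
   and distinct new vertices g i (disjoint from the core), with
   {f i, f (i+1 mod k), g i} an edge for all i. *)
Definition contains_C3 (k : nat) (H : {set {set V}}) : Prop :=
  exists (f g : 'I_k -> V),
    [/\ injective f, injective g, (forall i j, f i != g j) &
        forall i, [set f i; f (ordS i); g i] \in H].

End Hyper.

(* Main.v *)
Require Import Defs.
From mathcomp Require Import all_boot zify.
Set Implicit Arguments. Unset Strict Implicit. Unset Printing Implicit Defensive.

Section Mach.
Variable V : finType.
Variable H : {set {set V}}.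
Variable k : nat.

Definition hiD (u v : V) : bool := 3 * k <= codeg H u v.

Definition okE (x y : V * option V) : bool :=
  match x.2 with
  | None => hiD x.1 y.1
  | Some r => [&& r \in nbh H x.1 y.1, hiD x.1 r & hiD r y.1]
  end.

Definition okD (x y : V * option V) : bool :=
  match x.2 with
  | None => hiD x.1 y.1
  | Some r => r \in nbh H x.1 y.1
  end.

Definition Inv (s : seq (V * option V)) := uniq (map fst s ++ pmap snd s).

Lemma Inv_perm s s' : perm_eq s s' -> Inv s = Inv s'.
Proof.
move=> p; rewrite /Inv; apply: perm_uniq; apply: perm_cat.
  exact: perm_map.
exact: perm_pmap.
Qed.

Lemma pmap_perm (s s' : seq (V * option V)) : perm_eq s s' -> perm_eq (pmap snd s) (pmap snd s').
Proof. exact: perm_pmap. Qed.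

Lemma nbh_diag u : is_3graph H -> nbh H u u = set0.
Proof.
move=> h3; apply/setP => w; rewrite !inE; apply/negP => /h3.
have -> : [set u; u; w] = [set u; w] by apply/setP => x; rewrite !inE; case: (x == u).
by rewrite cards2; case: (u != w).
Qed.

Lemma exists_notin (A : {set V}) (l : seq V) : size l < #|A| -> exists2 x, x \in A & x \notin l.
Proof.
move=> lt; case: (boolP [exists x in A, x \notin l]) => [/existsP [x /andP [xA xl]]|H0].
  by exists x.
have sub : A \subset [set x in l].
  apply/subsetP => x xA; move/existsPn: H0 => /(_ x); rewrite xA /= negbK => xl; by rewrite inE.
move: (subset_leq_card sub); rewrite cardsE => le.
have := leq_trans le (card_size l); by rewrite leqNgt lt.
Qed.


Lemma cycle_nth (T : Type) (e : rel T) (x0 : T) (s : seq T) :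
  cycle e s <-> (forall i, i < size s -> e (nth x0 s i) (nth x0 s (i.+1 %% size s))).
Proof.
case: s => [|x p] //=.
have E : forall i, i < (size p).+1 -> nth x0 (rcons p x) i = nth x0 (x :: p) (i.+1 %% (size p).+1).
  move=> i lt; rewrite nth_rcons; case: ltngtP => [l|l|->].
  - by rewrite modn_small //.
  - by move: lt; rewrite ltnS leqNgt l.
  - by rewrite modnn.
have E2 : forall i, i < (size p).+1 -> nth x0 (x :: rcons p x) i = nth x0 (x :: p) i.
  by move=> i lt; rewrite -rcons_cons nth_rcons /= lt.
split.
  move/(pathP x0) => h i lt; rewrite -E // -E2 //; apply: h; by rewrite size_rcons.
move=> h; apply/(pathP x0) => i; rewrite size_rcons => lt; rewrite E // E2 //; exact: h.
Qed.

Lemma uniq_cat_neq (T : eqType) (A B : seq T) x y : uniq (A ++ B) -> x \in A -> y \in B -> x != y.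
Proof.
rewrite cat_uniq => /and3P [_ /hasPn h _] xA yB; apply/negP => /eqP E; subst.
by move: (h y yB); rewrite xA.
Qed.

Lemma pmap_all_some (s : seq (V * option V)) d :
  all (fun x => x.2 != None) s -> pmap snd s = map (fun x => odflt d x.2) s.
Proof.
elim: s => [|[v [r|]] s IH] //= a; by rewrite IH.
Qed.

Lemma FIN s : size s = k -> all (fun x => x.2 != None) s -> cycle okD s -> Inv s -> contains_C3 k H.
Proof.
case: s => [|x0 s'].
  move=> k0 _ _ _; rewrite -k0; exists (fun i : 'I_0 => match i with Ordinal _ p => False_rect _ (notF p) end).
  exists (fun i : 'I_0 => match i with Ordinal _ p => False_rect _ (notF p) end).
  by split; case.
set s := x0 :: s'.
move=> sz al cy iv.
pose d := x0.1.
pose f := fun i : 'I_k => (nth x0 s i).1.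
pose g := fun i : 'I_k => odflt d (nth x0 s i).2.
have eA : forall i : 'I_k, f i = nth d (map fst s) i.
  by move=> i; rewrite /f (nth_map x0) // sz.
have eB : forall i : 'I_k, g i = nth d (pmap snd s) i.
  by move=> i; rewrite /g (pmap_all_some d al) (nth_map x0) // sz.
move: iv; rewrite /Inv => iv.
have uA : uniq (map fst s) by move: iv; rewrite cat_uniq => /andP [].
have uB : uniq (pmap snd s) by move: iv; rewrite cat_uniq => /and3P [].
have szA : size (map fst s) = k by rewrite size_map.
have szB : size (pmap snd s) = k by rewrite (pmap_all_some d al) size_map.
exists f, g; split.
- move=> i j; rewrite !eA => /eqP; rewrite nth_uniq ?szA // => /eqP; exact: val_inj.
- move=> i j; rewrite !eB => /eqP; rewrite nth_uniq ?szB // => /eqP; exact: val_inj.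
- move=> i j; rewrite eA eB; apply: (uniq_cat_neq iv); apply: mem_nth; by rewrite ?szA ?szB.
- move=> i; move/(cycle_nth _ x0): cy => /(_ i); rewrite sz => /(_ (ltn_ord i)).
  have ali : (nth x0 s i).2 != None by apply: (allP al); apply: mem_nth; rewrite sz.
  rewrite /okD /g /f /=; case: (nth x0 s i).2 ali => [r|] //= _.
  by rewrite inE.
Qed.


Lemma rot_to (s : seq (V * option V)) x : x \in s ->
  exists q, perm_eq s (x :: q) /\ forall e, cycle e s = cycle e (x :: q).
Proof.
case/splitPr => s1 s2; exists (s2 ++ s1); split.
  by rewrite -cat_cons perm_catC.
by move=> e; rewrite cycle_catC.
Qed.

Lemma path_rcons_relabel (e : rel (V * option V)) (He : forall x y y', y.1 = y'.1 -> e x y = e x y')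
  y q z z' : z.1 = z'.1 -> path e y (rcons q z) -> path e y (rcons q z').
Proof.
move=> zz; rewrite !rcons_path => /andP [-> h] /=; by rewrite -(He _ _ _ zz).
Qed.

Lemma okD_snd x y y' : y.1 = y'.1 -> okD x y = okD x y'.
Proof. by rewrite /okD => ->. Qed.
Lemma okE_snd x y y' : y.1 = y'.1 -> okE x y = okE x y'.
Proof. by rewrite /okE => ->. Qed.

Lemma cyc_relabel (e : rel (V * option V)) (He : forall x y y', y.1 = y'.1 -> e x y = e x y')
  v l l' q : cycle e ((v,l)::q) -> e (v,l') (head (v,l') q) -> cycle e ((v,l')::q).
Proof.
case: q => [|y q] /=; first by move=> _ ->.
move=> /andP [_ p] ->; rewrite /=.
by apply: (path_rcons_relabel He _ p).
Qed.

Lemma count_none0 (s : seq (V * option V)) : count (fun x => x.2 == None) s = 0 -> all (fun x => x.2 != None) s.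
Proof. elim: s => [|[v [r|]] s IH] //=. Qed.

Lemma FILL (h3 : is_3graph H) (k1 : 0 < k) n : forall s, count (fun x => x.2 == None) s = n -> size s = k ->
  cycle okD s -> Inv s -> contains_C3 k H.
Proof.
elim: n => [|n IH] s cn sz cy iv.
  by apply: (FIN sz (count_none0 cn)).
have : has (fun x => x.2 == None) s by rewrite has_count cn.
case/hasP => [[v l]] xs /= /eqP lN; subst l.
have [q [pq ceq]] := rot_to xs.
rewrite ceq in cy; rewrite (Inv_perm pq) in iv.
have szq : size q = k.-1 by rewrite -sz (perm_size pq).
pose w := (head (v,None) q).1.
have hvw : hiD v w.
  by move: cy; rewrite /w; case: (q) => [|y q'] /= /andP [].
have [r rN rnot] : exists2 r, r \in nbh H v w & r \notin (map fst ((v,None)::q) ++ pmap snd ((v,None)::q)).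
  apply: exists_notin; apply: leq_trans hvw.
  rewrite size_cat size_map /= szq size_pmap.
  have : count (fun x : V * option V => x.2) q <= k.-1 by rewrite -szq count_size.
  move=> le; move: k1 le; lia.
apply: (IH ((v, Some r) :: q)).
- move: cn; rewrite ((permP pq) (fun x => x.2 == None)) /= => /eqP; rewrite eqSS => /eqP //.
- by rewrite /= szq; move: k1; case: k.
- apply: (cyc_relabel okD_snd cy); rewrite /okD /=.
  by move: rN; rewrite /w; case: (q).
- move: iv rnot; rewrite /Inv /= => /andP [vn u] rn.
  rewrite -cat1s (perm_uniq (permEl (perm_catCA _ _ _))) (perm_mem (permEl (perm_catCA _ _ _))) /=.
  move: rn; rewrite inE negb_or => /andP [rv rn].
  by rewrite inE negb_or eq_sym rv vn rn u.
Qed.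


Lemma okE_okD : subrel okE okD.
Proof. move=> [v [r|]] y //=; rewrite /okE /okD /= => /andP [] //. Qed.

Lemma EXP (h3 : is_3graph H) (k1 : 0 < k) n : forall s, k - size s = n -> size s <= k ->
  k <= size s + size (pmap snd s) -> cycle okE s -> Inv s -> contains_C3 k H.
Proof.
elim: n => [|n IH] s dn le1 le2 cy iv.
  have sz : size s = k by apply/eqP; rewrite eqn_leq le1 -subn_eq0 dn.
  apply: (FILL h3 k1 (erefl _) sz _ iv); exact: (sub_cycle okE_okD).
have : has (fun x => x.2 != None) s.
  rewrite has_count; move: le2; rewrite size_pmap.
  have : count (fun x : V * option V => x.2) s = count (fun x : V * option V => x.2 != None) s.
    by apply: eq_count => -[? []].
  move=> -> h; rewrite lt0n; apply/eqP => c; move: h; rewrite c addn0 => h; move: dn; lia.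
case/hasP => [[v l]] xs /=; case: l xs => // r xs _.
have [q [pq ceq]] := rot_to xs.
rewrite ceq in cy; rewrite (Inv_perm pq) in iv.
have szq : size (pmap snd q) + size q = size (pmap snd s) + size s - 2.
  by rewrite (perm_size pq) (perm_size (perm_pmap snd pq)) /=; lia.
have [hvr [hrw cyq]] : hiD v r /\ hiD r (head (v, Some r) q).1 /\ path okE (head (v,Some r) q) (behead (rcons q (v, Some r))).
  move: cy; case: (q) => [|y q'] /=.
    by rewrite /okE /= => /andP [/and3P [_ -> ->]].
  by rewrite /okE /= => /andP [/and3P [_ -> ->]].
apply: (IH ((v,None) :: (r,None) :: q)).
- move: dn; rewrite (perm_size pq) /=; lia.
- move: dn; rewrite (perm_size pq) /=; lia.
- move: le2 szq; rewrite (perm_size pq) (perm_size (perm_pmap snd pq)) /=; lia.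
- rewrite /= {1}/okE /= hvr /=.
  move: cyq hrw; case: (q) => [|y q'] /=.
    by rewrite /okE /= => _ ->.
  move=> p; rewrite {1}/okE /= => ->; rewrite /=.
  by apply: (path_rcons_relabel okE_snd _ p).
- move: iv; rewrite /Inv /= => /andP [vn u].
  rewrite -cat1s in vn u.
  rewrite (perm_uniq (permEl (perm_catCA _ _ _))) in u.
  rewrite (perm_mem (permEl (perm_catCA _ _ _))) in vn.
  move: u vn; rewrite /= => /andP [rn u]; rewrite inE negb_or => /andP [vr vn].
  by rewrite vr vn rn u.
Qed.


Lemma BUILD (h3 : is_3graph H) (k1 : 0 < k) s : size s <= k -> k <= size s + size (pmap snd s) ->
  cycle okE s -> Inv s -> contains_C3 k H.
Proof. exact: (EXP h3 k1 (erefl _)). Qed.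

End Mach.

Lemma SDR (V : finType) (d : V) (Sf : nat -> {set V}) (F : {set V}) n :
  (forall i, i < n -> n <= #|Sf i :\: F|) ->
  exists rs : seq V, [/\ size rs = n, uniq rs & forall i, i < n -> nth d rs i \in Sf i :\: F].
Proof.
elim: n => [|n IH] h; first by exists [::].
have [rs [sz u hh]] : exists rs : seq V, [/\ size rs = n, uniq rs & forall i, i < n -> nth d rs i \in Sf i :\: F].
  apply: IH => i lt; apply: leq_trans (h i (ltnW lt)); exact: leqnSn.
have : size rs < #|Sf n :\: F| by rewrite sz; apply: h.
move=> lt.
have [r rS rn] : exists2 r, r \in Sf n :\: F & r \notin rs.
  exact: exists_notin.
exists (rcons rs r); split.
- by rewrite size_rcons sz.
- by rewrite rcons_uniq rn u.
- move=> i; rewrite ltnS leq_eqVlt => /orP [/eqP ->|lt']; rewrite nth_rcons sz.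
    by rewrite ltnn eqxx.
  by rewrite lt'; apply: hh.
Qed.



Lemma ar_half i j : odd i = odd j -> i./2 = j./2 -> i = j.
Proof. move=> o h; rewrite -(odd_double_half i) -(odd_double_half j) o h //. Qed.

Lemma halflt i n : i < n.*2 -> i./2 < n.
Proof. move=> lt; have := odd_double_half i; lia. Qed.

Lemma ar_even i n : ~~ odd i -> i < n.*2 -> i.+1 < n.*2 /\ (i.+1)./2 = i./2 /\ odd i.+1.
Proof.
move=> o lt; have e := odd_double_half i; rewrite (negbTE o) add0n in e.
split; first by lia.
split; last by rewrite /= o.
by rewrite -{1}e /= uphalf_double.
Qed.

Lemma ar_odd i n : odd i -> i < n.*2 -> i.+1 %% n.*2 = ((i./2).+1 %% n).*2.
Proof.
move=> o lt; have e := odd_double_half i; rewrite o in e.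
have ei : i.+1 = ((i./2).+1).*2 by lia.
by rewrite ei -!muln2 muln_modl.
Qed.

Lemma ar_mod m n : 1 < n -> m < n -> m != m.+1 %% n.
Proof.
move=> n1 mn; case: (ltngtP m.+1 n) => [lt|gt|eq].
- by rewrite modn_small //; lia.
- lia.
- by rewrite eq modnn; apply/eqP => E; subst m; lia.
Qed.


Section Main1.
Variables (V : finType) (H : {set {set V}}) (k : nat) (W1 W2 : {set V}).
Hypothesis k4 : 4 <= k.
Hypothesis h3 : is_3graph H.
Hypothesis sf : superfull ((k - 1)./2) (3 * k) H.
Hypothesis dis : [disjoint W1 & W2].
Hypothesis c1 : 3 * k <= #|W1|.
Hypothesis c2 : 3 * k <= #|W2|.
Hypothesis cod : forall w1 w2, w1 \in W1 -> w2 \in W2 -> codeg H w1 w2 = (k - 1)./2.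
Local Notation t := ((k - 1)./2).
Local Notation hi := (hiD H k).

Lemma nbhC u v : nbh H u v = nbh H v u.
Proof. by apply/setP => w; rewrite !inE; congr (_ \in H); apply/setP => y; rewrite !inE; case: (y == u); case: (y == v). Qed.

Lemma codegC u v : codeg H u v = codeg H v u.
Proof. by rewrite /codeg nbhC. Qed.

Lemma hiC u v : hi u v = hi v u.
Proof. by rewrite /hiD codegC. Qed.

Lemma nbh_neq x u v : x \in nbh H u v -> [/\ x != u, x != v & u != v].
Proof.
rewrite inE => /h3 c.
have le2 : forall a b c0 : V, (a == b) || (a == c0) || (b == c0) -> #|[set a; b; c0]| <= 2.
  move=> a b c0 /orP [/orP [/eqP E|/eqP E]|/eqP E]; subst.
  - have -> : [set b; b; c0] = [set b; c0] by apply/setP => y; rewrite !inE; case: (y == b).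
    by rewrite cards2; case: (b != c0).
  - have -> : [set c0; b; c0] = [set c0; b] by apply/setP => y; rewrite !inE; case: (y == c0); case: (y == b).
    by rewrite cards2; case: (c0 != b).
  - have -> : [set a; c0; c0] = [set a; c0] by apply/setP => y; rewrite !inE; case: (y == c0); case: (y == a).
    by rewrite cards2; case: (a != c0).
split; apply/negP => /eqP E; subst.
- by have := le2 u v u; rewrite eqxx orbT c => /(_ isT).
- by have := le2 u v v; rewrite eqxx orbT c => /(_ isT).
- by have := le2 v v x; rewrite eqxx c => /(_ isT).
Qed.

Lemma disjW x : x \in W1 -> x \in W2 -> False.
Proof. by move=> x1 x2; move/disjoint_setI0: dis => /setP /(_ x); rewrite !inE x1 x2. Qed.

Lemma tlt : t < 3 * k.
Proof. lia. Qed.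

Lemma t1 : 1 <= t.
Proof. lia. Qed.

Lemma F2 a b x : a \in W1 -> b \in W2 -> x \in nbh H a b -> hi a x /\ hi b x.
Proof.
move=> aW bW xN; have [xa xb ab] := nbh_neq xN.
have ax : a != x by rewrite eq_sym.
have bx : b != x by rewrite eq_sym.
have eH : [set a; b; x] \in H by move: xN; rewrite inE.
have lab : codeg H a b < 3 * k by rewrite cod //; exact: tlt.
have aE : a \in [set a; b; x] by rewrite !inE eqxx.
have bE : b \in [set a; b; x] by rewrite !inE eqxx orbT.
have xE : x \in [set a; b; x] by rewrite !inE eqxx orbT.
split; rewrite /hiD leqNgt; apply/negP => l.
- have := (proj2 sf) _ eH a b a x aE bE
    aE xE ab (ax) lab l.
  move/setP => /(_ x); rewrite !inE eqxx orbT (negbTE xa) (negbTE xb) //.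
- have := (proj2 sf) _ eH a b b x aE bE
    bE xE ab (bx) lab l.
  move/setP => /(_ x); rewrite !inE eqxx orbT (negbTE xa) (negbTE xb) //.
Qed.

Lemma F1 a b x : a \in W1 -> b \in W2 -> x \in nbh H a b -> (x \notin W1) && (x \notin W2).
Proof.
move=> aW bW xN; have [xa xb ab] := nbh_neq xN.
have ax : a != x by rewrite eq_sym.
have bx : b != x by rewrite eq_sym.
have eH : [set a; b; x] \in H by move: xN; rewrite inE.
have lab : codeg H a b < 3 * k by rewrite cod //; exact: tlt.
have aE : a \in [set a; b; x] by rewrite !inE eqxx.
have bE : b \in [set a; b; x] by rewrite !inE eqxx orbT.
have xE : x \in [set a; b; x] by rewrite !inE eqxx orbT.
apply/andP; split; apply/negP => xW.
- have l : codeg H x b < 3 * k by rewrite cod //; exact: tlt.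
  have := (proj2 sf) _ eH a b x b aE bE
    xE bE ab xb lab l.
  move/setP => /(_ x); rewrite !inE eqxx /= (negbTE xa) (negbTE xb) //.
- have l : codeg H a x < 3 * k by rewrite cod //; exact: tlt.
  have := (proj2 sf) _ eH a b a x aE bE
    aE xE ab (ax) lab l.
  move/setP => /(_ x); rewrite !inE eqxx orbT (negbTE xa) (negbTE xb) //.
Qed.


Definition opp c d := ((c \in W1) && (d \in W2)) || ((c \in W2) && (d \in W1)).

Lemma oppC c d : opp c d = opp d c.
Proof. by rewrite /opp orbC; congr orb; rewrite andbC. Qed.

Lemma pairfacts c d : opp c d -> #|nbh H c d| = t /\
  forall r, r \in nbh H c d -> [/\ r \notin W1, r \notin W2, hi c r & hi r d].
Proof.
case/orP => /andP [cW dW].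
  split; first exact: cod.
  move=> r rN; have [h1 h2] := F2 cW dW rN; have /andP [f1 f2] := F1 cW dW rN.
  by rewrite f1 f2 h1 hiC h2.
split; first by rewrite /codeg nbhC; exact: cod.
move=> r rN; rewrite nbhC in rN.
have [h1 h2] := F2 dW cW rN; have /andP [f1 f2] := F1 dW cW rN.
by rewrite f1 f2 h2 hiC h1.
Qed.

Lemma pmap_snd_map (G : nat -> V * option V) (g : nat -> V) (l : seq nat) :
  (forall i, i \in l -> (G i).2 = Some (g i)) -> pmap snd (map G l) = map g l.
Proof.
elim: l => [|i l IH] //= h; rewrite (h i (mem_head _ _)) /= IH // => j jl.
by apply: h; rewrite inE jl orbT.
Qed.

Lemma card3 (x y z : V) : #|[set x; y; z]| <= 3.
Proof.
have -> : [set x; y; z] = [set w in [:: x; y; z]] by apply/setP => w; rewrite !inE orbA.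
by rewrite cardsE; apply: card_size.
Qed.

Lemma bigW (W : {set V}) (x y z : V) : 3 * k <= #|W| -> t < size (enum (W :\: [set x; y; z])).
Proof.
move=> cW; rewrite -cardE.
have := cardsID [set x; y; z] W.
have := leq_trans (subset_leq_card (subsetIr W [set x; y; z])) (card3 x y z).
have : t + 3 < 3 * k by lia.
lia.
Qed.

Lemma HUB u x0 x1 z : 2 <= t -> x0 \in W1 -> x1 \in W2 -> u \notin nbh H x0 x1 ->
  u \notin W1 -> u \notin W2 -> hi u x0 -> hi z u ->
  z \in (if odd t then W2 else W1) -> z != x0 -> z != x1 -> contains_C3 k H.
Proof.
move=> t2 x0W x1W uN uW1 uW2 hu0 hzu zW zx0 zx1.
pose T3 := [set x0; x1; z].
pose A := enum (W1 :\: T3). pose B := enum (W2 :\: T3).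
have sA : t < size A by apply: bigW.
have sB : t < size B by apply: bigW.
pose X i := if i == 0 then x0 else if i == 1 then x1 else if i == t then z
            else if odd i then nth x0 B i else nth x0 A i.
have x01 : x0 != x1 by apply/negP => /eqP E; subst; exact: (disjW x0W x1W).
have XW : forall i, i <= t -> X i \in (if odd i then W2 else W1).
  move=> i le; rewrite /X; case: eqP => [->|_] //; case: eqP => [->|_] //.
  case: eqP => [->|_] //; case: ifP => oi.
    by have := mem_nth x0 (leq_ltn_trans le sB); rewrite mem_enum !inE => /andP [].
  by have := mem_nth x0 (leq_ltn_trans le sA); rewrite mem_enum !inE => /andP [].
have Xfresh : forall i, i <= t -> i != 0 -> i != 1 -> i != t -> X i \notin T3.
  move=> i le n0 n1 nt; rewrite /X (negbTE n0) (negbTE n1) (negbTE nt); case: ifP => _.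
    by have := mem_nth x0 (leq_ltn_trans le sB); rewrite mem_enum !inE => /andP [].
  by have := mem_nth x0 (leq_ltn_trans le sA); rewrite mem_enum !inE => /andP [].
have t0 : t != 0 by rewrite -lt0n; apply: leq_trans t2.
have t1' : t != 1 by apply/negP => /eqP E; rewrite E in t2.
have X0 : X 0 = x0 by [].
have X1 : X 1 = x1 by [].
have Xt : X t = z by rewrite /X (negbTE t0) (negbTE t1') eqxx.
have XT3 : forall i, (i == 0) || (i == 1) || (i == t) -> X i \in T3.
  move=> i /orP [/orP [/eqP ->|/eqP ->]|/eqP ->]; rewrite ?X0 ?X1 ?Xt !inE eqxx ?orbT //.
have Xinj : forall i j, i <= t -> j <= t -> X i = X j -> i = j.
  move=> i j li lj E.
  case: (boolP (odd i == odd j)) => [/eqP pij|pij]; last first.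
    have h1 := XW i li; have h2 := XW j lj; rewrite E in h1.
    move: pij h1 h2; case: (odd i); case: (odd j) => //= _ h1 h2; [case: (disjW h2 h1)|case: (disjW h1 h2)].
  case: (boolP ((i == 0) || (i == 1) || (i == t))) => si;
  case: (boolP ((j == 0) || (j == 1) || (j == t))) => sj.
  - move: si sj E => /orP [/orP [/eqP ->|/eqP ->]|/eqP ->] /orP [/orP [/eqP ->|/eqP ->]|/eqP ->];
    rewrite ?X0 ?X1 ?Xt // => E;
    by [move: x01; rewrite E eqxx | move: zx0; rewrite E eqxx | move: zx1; rewrite E eqxx |
        move: x01; rewrite -E eqxx | move: zx0; rewrite -E eqxx | move: zx1; rewrite -E eqxx].
  - move: sj; rewrite !negb_or => /andP [/andP [j0 j1] jt].
    by have := Xfresh j lj j0 j1 jt; rewrite -E XT3.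
  - move: si; rewrite !negb_or => /andP [/andP [i0 i1] it].
    by have := Xfresh i li i0 i1 it; rewrite E XT3.
  - move: si sj E; rewrite !negb_or => /andP [/andP [i0 i1] it] /andP [/andP [j0 j1] jt].
    rewrite /X (negbTE i0) (negbTE i1) (negbTE it) (negbTE j0) (negbTE j1) (negbTE jt) pij.
    case: (odd j) => /eqP; rewrite nth_uniq ?enum_uniq //; try exact: (leq_ltn_trans _ sA);
      try exact: (leq_ltn_trans _ sB); by move/eqP.
have oppX : forall i, i < t -> opp (X i) (X i.+1).
  move=> i lt; have := XW i (ltnW lt); have := XW i.+1 lt; rewrite /opp /=.
  by case: (odd i) => /= -> ->; rewrite ?orbT.
have [rs [szr ur hr]] : exists rs : seq V, [/\ size rs = t.-1, uniq rs &
    forall i, i < t.-1 -> nth u rs i \in nbh H (X i.+1) (X i.+2) :\: [set u]].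
  apply: SDR => i lt.
  have lt' : i.+1 < t by clear -lt; lia.
  have [c _] := pairfacts (oppX i.+1 lt').
  have := cardsD1 u (nbh H (X i.+1) (X i.+2)); rewrite c.
  move: (#|_ :\ u|) => m; case: (u \in _) => /= E; clear -E; lia.
have [r0 r0N r0n] : exists2 r0, r0 \in nbh H x0 x1 & r0 \notin rs.
  apply: exists_notin; rewrite szr.
  have lt0 : 0 < t by clear -t2; lia.
  have [c _] := pairfacts (oppX 0 lt0); rewrite X0 X1 in c; rewrite c; clear -lt0; lia.
pose R := r0 :: rs.
have szR : size R = t by rewrite /= szr; clear -t2; lia.
have uR : uniq R by rewrite /= r0n ur.
have RN : forall i, i < t -> (nth u R i \in nbh H (X i) (X i.+1)) && (nth u R i != u).
  case => [|j] lt /=.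
    rewrite X0 X1 r0N /=; apply/negP => /eqP E; by rewrite -E r0N in uN.
  have lt' : j < t.-1 by clear -lt; lia.
  have := hr j lt'; rewrite !inE => /andP [-> ->] //.
pose G := fun i => (X i, if i < t then Some (nth u R i) else None).
pose s := (u, None) :: mkseq G t.+1.
have k1 : 0 < k by clear -k4; lia.
have pR : pmap snd s = R.
  rewrite /s /mkseq -addn1 iotaD map_cat /= pmap_cat (pmap_snd_map (g := nth u R)).
    rewrite /G add0n ltnn /= cats0.
    have -> : [seq nth u R i | i <- iota 0 t] = R by have := mkseq_nth u R; rewrite szR /mkseq.
    done.
  by move=> i; rewrite mem_iota add0n /G /= => ->.
have Xs : map fst (mkseq G t.+1) = mkseq X t.+1 by rewrite /mkseq -map_comp.
have szs : size s = t.+2 by rewrite /s /mkseq /= size_map size_iota.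
apply: (BUILD h3 k1 (s:=s)).
- rewrite szs; clear -k4; lia.
- rewrite pR szR szs; clear -k4; lia.
- have nthS : forall n, nth (u,None) s n.+1 = nth (u,None) (mkseq G t.+1) n by [].
  apply/(cycle_nth _ (u, None)) => i; rewrite szs => lt.
  case: i lt => [|j] lt.
    rewrite modn_small // nthS (nth_mkseq _ _ (ltn0Sn _)) /okE /=.
  have lt1 : j < t.+1 by [].
  rewrite nthS (nth_mkseq _ _ lt1).
  case: (ltngtP j t) => [jt|tj|jt].
  + rewrite modn_small; last by clear -jt; lia.
    have jt' : j.+1 < t.+1 by clear -jt; lia.
    rewrite nthS (nth_mkseq _ _ jt') /okE /G /= jt.
    have /andP [rN _] := RN j jt.
    have [_ h] := pairfacts (oppX j jt).
    by have [_ _ -> ->] := h _ rN; rewrite rN.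
  + by move: lt tj; clear; lia.
  + subst j; rewrite modnn /okE /G /= ltnn Xt //.
- rewrite /Inv pR.
  have -> : map fst s = u :: mkseq X t.+1 by rewrite /s -Xs.
  rewrite cat_cons cons_uniq.
  have XinW : forall x, x \in mkseq X t.+1 -> (x \in W1) || (x \in W2).
    move=> x /mapP [i]; rewrite mem_iota add0n => lt ->.
    by have := XW i lt; case: (odd i) => ->; rewrite ?orbT.
  have RnW : forall r, r \in R -> (r \notin W1) && (r \notin W2).
    move=> r /(nthP u) [i]; rewrite szR => lt <-.
    have /andP [rN _] := RN i lt.
    have [_ h] := pairfacts (oppX i lt).
    by have [-> -> _ _] := h _ rN.
  rewrite mem_cat negb_or -andbA; apply/and3P; split.
  + apply/negP => /XinW; by rewrite (negbTE uW1) (negbTE uW2).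
  + apply/negP => /(nthP u) [i]; rewrite szR => lt E.
    by have := RN i lt; rewrite E eqxx andbF.
  + rewrite cat_uniq uR andbT; apply/andP; split.
      rewrite /mkseq map_inj_in_uniq ?iota_uniq // => i j; rewrite !mem_iota !add0n => li lj.
      by apply: Xinj.
    apply/hasPn => r /RnW /andP [r1 r2]; apply/negP => /XinW; by rewrite (negbTE r1) (negbTE r2).
Qed.

Lemma allf a b x : a \in W1 -> b \in W2 -> x \in nbh H a b ->
  [/\ x \in nbh H b a, hi a x, hi x a, hi b x & hi x b] /\ (x \notin W1 /\ x \notin W2).
Proof.
move=> aW bW xN; have [h1 h2] := F2 aW bW xN; have /andP [f1 f2] := F1 aW bW xN.
by split => //; split => //; [rewrite nbhC | rewrite hiC | rewrite hiC].
Qed.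

Ltac contra_tac := match goal with
  | h1 : is_true (?x \in ?A), h2 : is_true (?x \notin ?A) |- _ => by rewrite h1 in h2
  | h1 : is_true (?x \in ?A), h2 : is_true (?x \in ?B) |- _ => case: (disjW h1 h2)
  | h : is_true (?x != ?x) |- _ => by rewrite eqxx in h
  end.

Ltac neq_tac := apply/negP => /eqP E; subst; contra_tac.

Ltac cyc_tac := rewrite /= /okE /=; repeat (apply/andP; split); try done.
Ltac fin_tac := rewrite /Inv /= ?inE ?negb_or; repeat (apply/andP; split); try done; try neq_tac.

Lemma T1 a b b' u : t = 1 -> a \in W1 -> b \in W2 -> b' \in W2 -> u \in nbh H a b -> u \notin nbh H a b' ->
  contains_C3 k H.
Proof.
move=> te aW bW b'W uN uN'.
have k1 : 0 < k by clear -k4; lia.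
have kk : k == 4 by apply/eqP; move: te k4; clear; lia.
have [a' a'W a'a] : exists2 a', a' \in W1 & a' \notin [:: a].
  apply: exists_notin; apply: leq_trans c1; clear -k4; rewrite /=; lia.
rewrite inE in a'a.
have sing : forall c d, c \in W1 -> d \in W2 -> exists x, nbh H c d = [set x].
  by move=> c d cW dW; apply/cards1P; rewrite -/(codeg H c d) cod // te.
have [u' Eu'] := sing _ _ aW b'W.
have [s Es] := sing _ _ a'W bW.
have [s' Es'] := sing _ _ a'W b'W.
have u'N : u' \in nbh H a b' by rewrite Eu' inE.
have sN : s \in nbh H a' b by rewrite Es inE.
have s'N : s' \in nbh H a' b' by rewrite Es' inE.
have uu' : u != u' by apply/negP => /eqP E; rewrite E u'N in uN'.
have [[uN2 hau hua hbu hub] [uW1 uW2]] := allf aW bW uN.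
have [[u'N2 hau' hu'a hb'u' hu'b'] [u'W1 u'W2]] := allf aW b'W u'N.
have [[sN2 ha's hsa' hbs hsb] [sW1 sW2]] := allf a'W bW sN.
have [[s'N2 ha's' hs'a' hb's' hs'b'] [s'W1 s'W2]] := allf a'W b'W s'N.
have bb' : b != b' by apply/negP => /eqP E; rewrite E in uN; rewrite uN in uN'.
clear Eu' Es Es' sing.
case: (eqVneq s u') => [E|n1].
  subst s.
  apply: (BUILD h3 k1 (s := [:: (a, None); (u, None); (b, None); (u', None)])); [by rewrite (eqP kk)|by rewrite (eqP kk)| by cyc_tac | by fin_tac].
case: (eqVneq s' u) => [E|n2].
  subst s'.
  apply: (BUILD h3 k1 (s := [:: (a, None); (u, None); (b', None); (u', None)])); [by rewrite (eqP kk)|by rewrite (eqP kk)| by cyc_tac | by fin_tac].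
case: (eqVneq s s') => [E|n3].
  subst s'.
  apply: (BUILD h3 k1 (s := [:: (b, Some u); (a, Some u'); (b', None); (s, None)])); [by rewrite (eqP kk)|by rewrite (eqP kk)| by cyc_tac | by fin_tac].
case: (eqVneq s u) => [E|n4].
  subst s. case: (eqVneq s' u') => [E|n5].
    subst s'.
    apply: (BUILD h3 k1 (s := [:: (a, None); (u, None); (a', None); (u', None)])); [by rewrite (eqP kk)|by rewrite (eqP kk)| by cyc_tac | by fin_tac].
  apply: (BUILD h3 k1 (s := [:: (a', Some s'); (b', Some u'); (a, None); (u, None)])); [by rewrite (eqP kk)|by rewrite (eqP kk)| by cyc_tac | by fin_tac].
case: (eqVneq s' u') => [E|n6].
  subst s'.
  apply: (BUILD h3 k1 (s := [:: (a, Some u); (b, Some s); (a', None); (u', None)])); [by rewrite (eqP kk)|by rewrite (eqP kk)| by cyc_tac | by fin_tac].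
apply: (BUILD h3 k1 (s := [:: (a, Some u); (b, Some s); (a', Some s'); (b', Some u')])); [by rewrite (eqP kk)|by rewrite (eqP kk)| by cyc_tac | by fin_tac].
Qed.

End Main1.


Definition PR (V : finType) (H : {set {set V}}) (W1 W2 : {set V}) (u : V) :=
  exists a0 b0, forall a1 b1, a1 \in W1 -> b1 \in W2 -> u \in nbh H a1 b1 -> a1 = a0 /\ b1 = b0.

Section Main2.
Variables (V : finType) (H : {set {set V}}) (k : nat) (W1 W2 : {set V}).
Hypothesis k4 : 4 <= k.
Hypothesis h3 : is_3graph H.
Hypothesis sf : superfull ((k - 1)./2) (3 * k) H.
Hypothesis dis : [disjoint W1 & W2].
Hypothesis c1 : 3 * k <= #|W1|.
Hypothesis c2 : 3 * k <= #|W2|.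
Hypothesis cod : forall w1 w2, w1 \in W1 -> w2 \in W2 -> codeg H w1 w2 = (k - 1)./2.
Local Notation t := ((k - 1)./2).
Local Notation hi := (hiD H k).

Lemma dis' : [disjoint W2 & W1].
Proof. by rewrite disjoint_sym. Qed.
Lemma cod' : forall w1 w2, w1 \in W2 -> w2 \in W1 -> codeg H w1 w2 = t.
Proof. by move=> w1 w2 h1 h2; rewrite codegC; apply: cod. Qed.

Lemma disjW' x : x \in W1 -> x \in W2 -> False.
Proof. exact: (disjW dis). Qed.

Lemma Core (nC : ~ contains_C3 k H) a b b' u : a \in W1 -> b \in W2 -> b' \in W2 ->
  u \in nbh H a b -> u \notin nbh H a b' -> 1 < t /\ PR H W1 W2 u.
Proof.
move=> aW bW b'W uN uN'.
have [[uN2 hau hua hbu hub] [uW1 uW2]] := allf k4 h3 sf dis c1 c2 cod aW bW uN.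
have bb' : b != b' by apply/negP => /eqP E; subst b'; by rewrite uN in uN'.
have ba : b != a by apply/negP => /eqP E; subst b; case: (disjW' aW bW).
have t1 : 1 <= t by clear -k4; lia.
case: (eqVneq t 1) => [te|tn1].
  by case: nC; apply: (T1 k4 h3 sf dis c1 c2 cod te aW bW b'W uN uN').
have t2 : 1 < t by move: tn1 t1; clear; lia.
case: (boolP (odd t)) => ot.
  case: nC; apply: (HUB k4 h3 sf dis c1 c2 cod (u:=u) (x0:=a) (x1:=b') (z:=b)) => //.
  by rewrite ot.
split => //.
case: (boolP [exists a2 in W1, exists b2 in W2, (a2 != a) && (u \in nbh H a2 b2)]) => [E1|n1].
  case/exists_inP: E1 => a2 a2W /exists_inP [b2 b2W /andP [a2a uN2']].
  have [[_ ha2u _ _ _] _] := allf k4 h3 sf dis c1 c2 cod a2W b2W uN2'.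
  case: nC; apply: (HUB k4 h3 sf dis c1 c2 cod (u:=u) (x0:=a) (x1:=b') (z:=a2)) => //.
  - by rewrite (negbTE ot).
  - by apply/negP => /eqP E; subst a2; case: (disjW' a2W b'W).
case: (boolP [exists b2 in W2, exists a2 in W1, (b2 != b) && (u \in nbh H a2 b2)]) => [E2|n2].
  case/exists_inP: E2 => b2 b2W /exists_inP [al alW /andP [b2b uN2']].
  have [[_ _ _ hb2u _] _] := allf k4 h3 sf dis c1 c2 cod alW b2W uN2'.
  have [a2 a2W a2a] : exists2 a2, a2 \in W1 & a2 \notin [:: a].
    apply: exists_notin; apply: leq_trans c1; clear -k4; rewrite /=; lia.
  rewrite inE in a2a.
  have uN3 : u \notin nbh H b a2.
    rewrite nbhC; apply/negP => uN3; move/negP: n1; apply.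
    by apply/exists_inP; exists a2 => //; apply/exists_inP; exists b => //; rewrite a2a uN3.
  case: nC; apply: (HUB k4 h3 sf dis' c2 c1 cod' (u:=u) (x0:=b) (x1:=a2) (z:=b2)) => //.
  - by rewrite (negbTE ot).
  - by apply/negP => /eqP E; subst b2; case: (disjW' a2W b2W).
exists a, b => a1 b1 a1W b1W uN1; split; apply/eqP.
- apply: contraNT n1 => ne; apply/exists_inP; exists a1 => //; apply/exists_inP; exists b1 => //.
  by rewrite ne uN1.
- apply: contraNT n2 => ne; apply/exists_inP; exists b1 => //; apply/exists_inP; exists a1 => //.
  by rewrite ne uN1.
Qed.


Lemma UP : 1 < t ->
  (forall u a b, a \in W1 -> b \in W2 -> u \in nbh H a b ->
     (forall a1 b1, a1 \in W1 -> b1 \in W2 -> u \in nbh H a1 b1) \/ PR H W1 W2 u) ->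
  (exists a b a1 b1, [/\ a \in W1, b \in W2, a1 \in W1, b1 \in W2 & nbh H a b != nbh H a1 b1]) ->
  contains_C3 k H.
Proof.
move=> t2 hyp [a0 [b0 [a1 [b1 [a0W b0W a1W b1W ne]]]]].
pose U := [set x | [forall a in W1, forall b in W2, x \in nbh H a b]].
pose D a b := nbh H a b :\: U.
have cN : forall a b, a \in W1 -> b \in W2 -> #|nbh H a b| = t by move=> a b aW bW; apply: cod.
have Dne : forall a b, a \in W1 -> b \in W2 -> exists r, r \in D a b.
  move=> a b aW bW; case: (set_0Vmem (D a b)) => [E|[r rD]]; last by exists r.
  have eq : forall c d, c \in W1 -> d \in W2 -> nbh H a b = nbh H c d.
    move=> c d cW dW; apply/eqP; rewrite eqEcard cN // cN // leqnn andbT.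
    apply/subsetP => x xN.
    have : x \notin D a b by rewrite E inE.
    rewrite inE xN andbT negbK inE => /forall_inP /(_ c cW) /forall_inP /(_ d dW) //.
  by move: ne; rewrite -(eq _ _ a0W b0W) -(eq _ _ a1W b1W) eqxx.
pose rho a b := odflt a [pick x in D a b].
have rhoD : forall a b, a \in W1 -> b \in W2 -> rho a b \in D a b.
  move=> a b aW bW; rewrite /rho; case: pickP => [x xD|none] //=.
  by have [r rD] := Dne a b aW bW; move: (none r); rewrite rD.
have rhoN : forall a b, a \in W1 -> b \in W2 -> rho a b \in nbh H a b.
  by move=> a b aW bW; have := rhoD a b aW bW; rewrite inE => /andP [].
have rhoP : forall a b c d, a \in W1 -> b \in W2 -> c \in W1 -> d \in W2 ->
    rho a b \in nbh H c d -> a = c /\ b = d.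
  move=> a b c d aW bW cW dW rN.
  have := rhoD a b aW bW; rewrite inE => /andP [rU rN'].
  case: (hyp _ _ _ aW bW rN') => [univ|[x [y h]]].
    case/negP: rU; rewrite ?inE.
    by apply/forall_inP => a' a'W; apply/forall_inP => b' b'W; apply: univ.
  have [-> ->] := h _ _ aW bW rN'; have [-> ->] := h _ _ cW dW rN; done.
pose A := enum W1. pose B := enum W2.
have sA : t < size A by rewrite -cardE; apply: leq_trans c1; clear -k4; lia.
have sB : t < size B by rewrite -cardE; apply: leq_trans c2; clear -k4; lia.
pose pa j := nth a0 A j. pose pb j := nth b0 B j.
have paW : forall j, j < t -> pa j \in W1.
  by move=> j lt; have := mem_nth a0 (ltn_trans lt sA); rewrite mem_enum.
have pbW : forall j, j < t -> pb j \in W2.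
  by move=> j lt; have := mem_nth b0 (ltn_trans lt sB); rewrite mem_enum.
have paI : forall j j', j < t -> j' < t -> pa j = pa j' -> j = j'.
  move=> j j' l l' /eqP; rewrite nth_uniq ?enum_uniq //; [by move/eqP|exact: ltn_trans sA|exact: ltn_trans sA].
have pbI : forall j j', j < t -> j' < t -> pb j = pb j' -> j = j'.
  move=> j j' l l' /eqP; rewrite nth_uniq ?enum_uniq //; [by move/eqP|exact: ltn_trans sB|exact: ltn_trans sB].
pose al i := if odd i then (i./2).+1 %% t else i./2.
have alt : forall i, i < t.*2 -> al i < t.
  move=> i lt; rewrite /al; case: (odd i); last exact: halflt.
  by apply: ltn_pmod; clear -t2; lia.
pose g i := rho (pa (al i)) (pb i./2).
pose F i := if odd i then (pb i./2, Some (g i)) else (pa i./2, Some (g i)).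
pose s := mkseq F t.*2.
have gf : forall i, i < t.*2 -> [/\ g i \in nbh H (pb i./2) (pa (al i)), g i \in nbh H (pa (al i)) (pb i./2),
    hi (pa (al i)) (g i), hi (g i) (pa (al i)) & hi (pb i./2) (g i)] /\ [/\ hi (g i) (pb i./2), g i \notin W1 & g i \notin W2].
  move=> i lt; have aW := paW _ (alt i lt); have bW := pbW _ (halflt lt).
  have h0 := rhoN _ _ aW bW.
  have [[h1 h2 h3' h4 h5] [h6 h7]] := allf k4 h3 sf dis c1 c2 cod aW bW h0.
  by split; split.
have k1 : 0 < k by clear -k4; lia.
have szs : size s = t.*2 by rewrite size_mkseq.
have pS : pmap snd s = mkseq g t.*2.
  by rewrite /s /mkseq (pmap_snd_map (g := g)) // => i _; rewrite /F; case: (odd i).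
apply: (BUILD h3 k1 (s := s)).
- rewrite szs; clear -k4; lia.
- rewrite szs pS size_mkseq; clear -k4; lia.
- apply/(cycle_nth _ (a0, None)) => i; rewrite szs => lt.
  rewrite /s (nth_mkseq _ _ lt).
  case: (boolP (odd i)) => oi.
  + rewrite (ar_odd oi lt).
    have mlt : (i./2).+1 %% t < t by apply: ltn_pmod; clear -t2; lia.
    have mlt2 : ((i./2).+1 %% t).*2 < t.*2 by rewrite ltn_double.
    rewrite (nth_mkseq _ _ mlt2) /F oi odd_double doubleK /okE /=.
    have [[h1 h2 h3' h4 h5] [h6 h7 h8]] := gf i lt.
    move: h1 h4 h5; rewrite /al oi => -> -> ->; done.
  + have [lt1 [hh o1]] := ar_even oi lt.
    rewrite modn_small // (nth_mkseq _ _ lt1) /F o1 (negbTE oi) hh /okE /=.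
    have [[h1 h2 h3' h4 h5] [h6 h7 h8]] := gf i lt.
    move: h2 h3' h6; rewrite /al (negbTE oi) => -> -> ->; done.
- rewrite /Inv pS.
  have Xs : map fst s = mkseq (fun i => (F i).1) t.*2 by rewrite /s /mkseq -map_comp.
  rewrite Xs cat_uniq; apply/and3P; split.
  + rewrite /mkseq map_inj_in_uniq ?iota_uniq // => i j; rewrite !mem_iota !add0n => li lj.
    rewrite /F; case: (boolP (odd i)) => oi; case: (boolP (odd j)) => oj /= E.
    * by apply: ar_half; [rewrite oi oj | apply: pbI (halflt li) (halflt lj) E].
    * by have := pbW _ (halflt li); rewrite E => h; case: (disjW' (paW _ (halflt lj)) h).
    * by have := paW _ (halflt li); rewrite E => h; case: (disjW' h (pbW _ (halflt lj))).
    * by apply: ar_half; [rewrite (negbTE oi) (negbTE oj) | apply: paI (halflt li) (halflt lj) E].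
  + apply/hasPn => x /mapP [i]; rewrite mem_iota add0n => li ->.
    apply/negP => /mapP [j]; rewrite mem_iota add0n => lj E.
    have [_ [_ n1 n2]] := gf i li.
    move: E; rewrite /F; case: (odd j) => /= E.
      by move: n2; rewrite E pbW // halflt.
    by move: n1; rewrite E paW // halflt.
  + rewrite /mkseq map_inj_in_uniq ?iota_uniq // => i j; rewrite !mem_iota !add0n => li lj E.
    have [[_ gj _ _ _] _] := gf j lj.
    rewrite -E in gj.
    have [ea eb] := rhoP _ _ _ _ (paW _ (alt i li)) (pbW _ (halflt li)) (paW _ (alt j lj)) (pbW _ (halflt lj)) gj.
    have eb' := pbI _ _ (halflt li) (halflt lj) eb.
    have ea' := paI _ _ (alt i li) (alt j lj) ea.
    move: ea'; rewrite /al; case: (boolP (odd i)) => oi; case: (boolP (odd j)) => oj ea'.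
    * by apply: ar_half; [rewrite oi oj|].
    * rewrite -eb' in ea'; have := ar_mod t2 (halflt li); by rewrite ea' eqxx.
    * rewrite eb' in ea'; have := ar_mod t2 (halflt lj); by rewrite {1}ea' eqxx.
    * by apply: ar_half; [rewrite (negbTE oi) (negbTE oj)|].
Qed.

End Main2.


Theorem lemma2p22 (V : finType) (H : {set {set V}}) (k : nat)
    (W1 W2 : {set V}) :
  4 <= k ->
  is_3graph H ->
  superfull ((k - 1)./2) (3 * k) H ->
  [disjoint W1 & W2] ->
  3 * k <= #|W1| -> 3 * k <= #|W2| ->
  (forall w1 w2, w1 \in W1 -> w2 \in W2 -> codeg H w1 w2 = (k - 1)./2) ->
  ~ contains_C3 k H ->
  exists L : {set V},
    [/\ #|L| = (k - 1)./2, [disjoint L & W1 :|: W2] &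
        forall w1 w2, w1 \in W1 -> w2 \in W2 -> nbh H w1 w2 = L].
Proof.
move=> k4 h3 sf dis c1 c2 cod nC.
have dis2 := dis' dis.
have cod2 := cod' cod.
have cfg : forall u a b a1 b1, a \in W1 -> b \in W2 -> a1 \in W1 -> b1 \in W2 ->
    u \in nbh H a b -> u \notin nbh H a1 b1 -> 1 < (k - 1)./2 /\ PR H W1 W2 u.
  move=> u a b a1 b1 aW bW a1W b1W uN uN1.
  case: (boolP (u \in nbh H a b1)) => uN2.
    have uN3 : u \in nbh H b1 a by rewrite nbhC.
    have uN4 : u \notin nbh H b1 a1 by rewrite nbhC.
    have [t2 [b0 [a0 h]]] := Core k4 h3 sf dis2 c2 c1 cod2 nC b1W aW a1W uN3 uN4.
    split => //; exists a0, b0 => a' b' a'W b'W uN'.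
    have uN'' : u \in nbh H b' a' by rewrite nbhC.
    by have [-> ->] := h b' a' b'W a'W uN''.
  exact: (Core k4 h3 sf dis c1 c2 cod nC aW bW b1W uN uN2).
have cN : forall a b, a \in W1 -> b \in W2 -> #|nbh H a b| = (k - 1)./2 by move=> a b aW bW; apply: cod.
have EQ : forall a b a1 b1, a \in W1 -> b \in W2 -> a1 \in W1 -> b1 \in W2 -> nbh H a b = nbh H a1 b1.
  move=> a b a1 b1 aW bW a1W b1W; apply/eqP; apply/negPn/negP => ne.
  have [u uN uN1] : exists2 u, u \in nbh H a b & u \notin nbh H a1 b1.
    case: (boolP (nbh H a b \subset nbh H a1 b1)) => sub.
      by move: ne; rewrite eqEcard sub cN // cN // leqnn.
    by case/subsetPn: sub => u h1 h2; exists u.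
  have [t2 _] := cfg _ _ _ _ _ aW bW a1W b1W uN uN1.
  case: nC; apply: (UP k4 h3 sf dis c1 c2 cod t2).
    move=> v c d cW dW vN.
    case: (boolP [forall c1 in W1, forall d1 in W2, v \in nbh H c1 d1]) => [all|nall].
      by left => c' d' c'W d'W; move/forall_inP: all => /(_ c' c'W) /forall_inP /(_ d' d'W).
    right; case/forall_inPn: nall => c' c'W /forall_inPn [d' d'W vN'].
    by have [_ P] := cfg _ _ _ _ _ cW dW c'W d'W vN vN'.
  by exists a, b, a1, b1; split.
have [a0 a0W _] : exists2 a0, a0 \in W1 & a0 \notin [::].
  by apply: exists_notin; apply: leq_trans c1; clear -k4; rewrite /=; lia.
have [b0 b0W _] : exists2 b0, b0 \in W2 & b0 \notin [::].
  by apply: exists_notin; apply: leq_trans c2; clear -k4; rewrite /=; lia.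
exists (nbh H a0 b0); split.
- exact: cN.
- rewrite disjoints_subset; apply/subsetP => x xN.
  have /andP [n1 n2] := F1 k4 h3 sf dis c1 c2 cod a0W b0W xN.
  by rewrite !inE negb_or n1 n2.
- by move=> w1 w2 w1W w2W; apply: EQ.
Qed.
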